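(* Let $q>0$, $x\in\mathbb{R}$ with $|x|<q$, and $\ell\in\{0,1,2,\ldots\}$. Then $$\tilde\gamma_\ell(q+x)=\tilde\gamma_\ell(q)+(-1)^\ell\sum_{j=2}^\infty\frac{x^{j-1}}{(j-1)!}\sum_{k=0}^{\ell}\binom{\ell}{k}(-1)^k k!\, s(j,k+1)\,\zeta_E^{(\ell-k)}(j,q).$$
   Context: For $q>0$, $\zeta_E(z,q)=\sum_{n=0}^\infty (-1)^n (n+q)^{-z}$ for $\mathrm{Re}(z)>0$, extended by analytic continuation to an entire function of $z$; $\zeta_E^{(m)}(z,q)$ denotes $\frac{\partial^m}{\partial z^m}\zeta_E(z,q)$. The modified Stieltjes constants $\tilde\gamma_k(q)$ are defined by the Taylor expansion $\zeta_E(z,q)=\sum_{k=0}^\infty\frac{(-1)^k\tilde\gamma_k(q)}{k!}(z-1)^k$. $s(n,k)$ are the (signed) Stirling numbers of the first kind: $x(x-1)\cdots(x-n+1)=\sum_{k=0}^n s(n,k)x^k$. *)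

(* Defs.v *)
From Stdlib Require Import Reals Lra Lia.
From Coquelicot Require Import Coquelicot.
Open Scope R_scope.

(* Alternating Hurwitz zeta function, restricted to real z > 0, where
   zeta_E(z,q) = sum_{n>=0} (-1)^n (n+q)^{-z} converges (q > 0).
   The entire function of the paper coincides with this on (0,+oo). *)
Definition zetaE (z q : R) : R :=
  Series (fun n : nat => (-1) ^ n * Rpower (INR n + q) (- z)).

(* m-th derivative in z:  zeta_E^{(m)}(z,q).  Since zeta_E(.,q) is entire,
   its derivatives at real points z > 0 equal the real derivatives of the
   restriction to the open half-line (0,+oo). *)
Definition zetaE_deriv (m : nat) (z q : R) : R :=
  Derive_n (fun s => zetaE s q) m z.

(* Modified Stieltjes constants: from the Taylor expansion
   zeta_E(z,q) = sum_k (-1)^k gt_k(q)/k! (z-1)^k we read off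
   (-1)^k gt_k(q) / k! = zeta_E^{(k)}(1,q) / k!, i.e. gt_k(q) = (-1)^k zeta_E^{(k)}(1,q). *)
Definition mod_stieltjes (k : nat) (q : R) : R :=
  (-1) ^ k * zetaE_deriv k 1 q.

Fixpoint stirling1 (n k : nat) : R :=
  match n, k with
  | O, O => 1
  | O, S _ => 0
  | S _, O => 0
  | S n', S k' => stirling1 n' k' - INR n' * stirling1 n' (S k')
  end.

Fixpoint falling (x : R) (n : nat) : R :=
  match n with
  | O => 1
  | S n' => falling x n' * (x - INR n')
  end.

Lemma stirling1_zero n k : (n < k)%nat -> stirling1 n k = 0.
Proof.
  revert k; induction n as [|n IH]; intros [|k] H; simpl; try lia; try reflexivity.
  rewrite !IH by lia. ring.
Qed.
Lemma stirling1_gen n : forall N x, (n <= N)%nat ->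
  sum_f_R0 (fun k => stirling1 n k * x ^ k) N = falling x n.
Proof.
  induction n as [|n IH]; intros N x HN.
  - simpl. induction N as [|N IHN]; simpl. ring.
    rewrite IHN by lia. ring.
  - destruct N as [|N]; [lia|].
    rewrite decomp_sum by lia. simpl stirling1 at 1.
    replace (sum_f_R0 (fun i => stirling1 (S n) (S i) * x ^ S i) (Init.Nat.pred (S N)))
      with (x * sum_f_R0 (fun i => stirling1 n i * x ^ i) N
            - INR n * (sum_f_R0 (fun i => stirling1 n i * x ^ i) (S N) - stirling1 n 0)).
    + rewrite IH by lia. rewrite IH by lia. simpl falling.
      destruct n; simpl; ring.
    + simpl pred. rewrite tech5. rewrite (stirling1_zero n (S N)) by lia.
      assert (E: forall M, sum_f_R0 (fun i => stirling1 n i * x ^ i) (S M) - stirling1 n 0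
        = sum_f_R0 (fun i => stirling1 n (S i) * x ^ S i) M).
      { intro M. rewrite decomp_sum by lia. simpl. ring. }
      replace (sum_f_R0 (fun i => stirling1 n i * x ^ i) N + 0 * x ^ S N - stirling1 n 0)
        with (sum_f_R0 (fun i => stirling1 n i * x ^ i) N - stirling1 n 0) by ring.
      destruct N.
      * assert (n = 0)%nat by lia. subst n. simpl. ring.
      * rewrite E.
        rewrite (sum_eq (fun i => stirling1 (S n) (S i) * x ^ S i)
           (fun i => (stirling1 n i * x ^ i) * x + (stirling1 n (S i) * x ^ S i) * (- INR n)))
          by (intros i _; simpl; ring).
        rewrite plus_sum, <- !scal_sum.
        rewrite (tech5 (fun i => stirling1 n (S i) * x ^ S i) N).
        rewrite (stirling1_zero n (S (S N))) by lia. ring.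
Qed.

Lemma stirling1_defining n x :
  sum_f_R0 (fun k => stirling1 n k * x ^ k) n = falling x n.
Proof. apply stirling1_gen; lia. Qed.

(* Main.v *)
Require Import Defs.
From Stdlib Require Import Reals Factorial Binomial.
From Coquelicot Require Import Coquelicot.
From Stdlib Require Import Lra Lia ZArith.
Open Scope R_scope.

Lemma exp_le_exp (x y : R) : x <= y -> exp x <= exp y.
Proof. intros [H|H]. left; apply exp_increasing; exact H. subst; lra. Qed.

Lemma ln_le_mono (x y : R) : 0 < x -> x <= y -> ln x <= ln y.
Proof. intros Hx [H|H]. left; apply ln_increasing; lra. subst; lra. Qed.

Lemma pow_le_fact_exp (u : R) (p : nat) : 0 <= u -> u ^ p <= INR (fact p) * exp u.
Proof.
  intros Hu.
  assert (Hf : 0 < INR (fact p)) by apply lt_0_INR, lt_O_fact.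
  pose proof (exp_ge_taylor u p Hu) as H.
  assert (u ^ p / INR (fact p) <= sum_f_R0 (fun k => u ^ k / INR (fact k)) p).
  { destruct p as [|p]. simpl. lra.
    rewrite tech5. assert (0 <= sum_f_R0 (fun k : nat => u ^ k / INR (fact k)) p).
    { apply cond_pos_sum. intro n. apply Rmult_le_pos. apply pow_le; lra.
      left; apply Rinv_0_lt_compat, lt_0_INR, lt_O_fact. }
    lra. }
  assert (u ^ p / INR (fact p) <= exp u) by lra.
  unfold Rdiv in H1. apply (Rmult_le_compat_l (INR (fact p))) in H1; [|lra].
  rewrite <- Rmult_assoc, (Rmult_comm _ (u^p)), Rmult_assoc, Rinv_r in H1; lra.
Qed.

Lemma ln_pow_bound (t d : R) (p : nat) : 0 < t -> 0 < d ->
  Rabs (ln t) ^ p <= INR (fact p) / d ^ p * (exp (d * ln t) + exp (- d * ln t)).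
Proof.
  intros Ht Hd.
  assert (Hdp : 0 < d ^ p) by (apply pow_lt; lra).
  pose proof (pow_le_fact_exp (d * Rabs (ln t)) p ltac:(apply Rmult_le_pos; [lra| apply Rabs_pos])) as H.
  assert (exp (d * Rabs (ln t)) <= exp (d * ln t) + exp (- d * ln t)).
  { pose proof (exp_pos (d * ln t)) as E1. pose proof (exp_pos (- d * ln t)) as E2.
    destruct (Rle_dec 0 (ln t)).
    - rewrite Rabs_right; lra.
    - rewrite Rabs_left; [|lra]. replace (d * - ln t) with (- d * ln t) by ring. lra. }
  rewrite Rpow_mult_distr in H.
  assert (Hf : 0 <= INR (fact p)) by apply pos_INR.
  apply Rmult_le_reg_l with (d ^ p); [lra|].
  unfold Rdiv. replace (d ^ p * (INR (fact p) * / d ^ p * (exp (d * ln t) + exp (- d * ln t))))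
    with (INR (fact p) * (exp (d * ln t) + exp (- d * ln t))) by (field; lra).
  apply Rle_trans with (1 := H). apply Rmult_le_compat_l; lra.
Qed.

Lemma exp_ln_interp (a s0 s s1 : R) : s0 <= s <= s1 ->
  exp (s * a) <= exp (s0 * a) + exp (s1 * a).
Proof.
  intros Hs. pose proof (exp_pos (s0 * a)) as E0. pose proof (exp_pos (s1 * a)) as E1.
  destruct (Rle_dec 0 a).
  - assert (exp (s * a) <= exp (s1 * a)). apply exp_le_exp; nra. lra.
  - assert (exp (s * a) <= exp (s0 * a)). apply exp_le_exp; nra. lra.
Qed.

Lemma exp_ln_lim (s y : R) : 0 < s -> 0 < y ->
  is_lim_seq (fun n => exp (- s * ln (INR n + y))) 0.
Proof.
  intros Hs Hy. apply is_lim_seq_spec. intros eps.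
  destruct (archimed (exp (- ln eps / s))) as [H1 _].
  assert (0 <= IZR (up (exp (- ln eps / s)))) by (pose proof (exp_pos (- ln eps / s)); lra).
  exists (Z.to_nat (up (exp (- ln eps / s)))). intros n Hn.
  rewrite Rminus_0_r, Rabs_right by (left; apply exp_pos).
  apply le_INR in Hn. rewrite INR_IZR_INZ, Z2Nat.id in Hn by (apply le_IZR; lra).
  pose proof (pos_INR n) as Hp.
  assert (- ln eps / s < ln (INR n + y)).
  { rewrite <- (ln_exp (- ln eps / s)). apply ln_increasing. apply exp_pos. lra. }
  rewrite <- (exp_ln eps) by apply cond_pos. apply exp_increasing.
  apply Rmult_lt_compat_l with (r := s) in H0; [|lra].
  unfold Rdiv in H0. field_simplify in H0; lra.
Qed.

Lemma telescope (b : nat -> R) : is_lim_seq b 0 -> is_series (fun k => b k - b (S k)) (b O).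
Proof.
  intros Hb. apply is_series_Reals. intros eps Heps.
  apply is_lim_seq_spec in Hb. destruct (Hb (mkposreal eps Heps)) as [N HN].
  exists N. intros n Hn.
  assert (E : sum_f_R0 (fun k => b k - b (S k)) n = b O - b (S n)).
  { clear. induction n; simpl. ring. rewrite IHn. ring. }
  rewrite E. unfold R_dist. specialize (HN (S n) ltac:(lia)). simpl in HN.
  rewrite Rminus_0_r in HN. rewrite Rabs_minus_sym. replace (b O - (b O - b (S n))) with (b (S n)) by ring. exact HN.
Qed.

Lemma exs_le (a b : nat -> R) : (forall n, Rabs (a n) <= b n) -> ex_series b -> ex_series a.
Proof. intros H Hb. exact (ex_series_le a b H Hb). Qed.
Lemma exs_plus (a b : nat -> R) : ex_series a -> ex_series b -> ex_series (fun n => a n + b n).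
Proof. intros Ha Hb. exact (ex_series_plus a b Ha Hb). Qed.
Lemma exs_minus (a b : nat -> R) : ex_series a -> ex_series b -> ex_series (fun n => a n - b n).
Proof. intros Ha Hb. exact (ex_series_minus a b Ha Hb). Qed.
Lemma iss_plus (a b : nat -> R) la lb : is_series a la -> is_series b lb -> is_series (fun n => a n + b n) (la + lb).
Proof. intros Ha Hb. exact (is_series_plus a b la lb Ha Hb). Qed.
Lemma iss_minus (a b : nat -> R) la lb : is_series a la -> is_series b lb -> is_series (fun n => a n - b n) (la - lb).
Proof. intros Ha Hb. exact (is_series_minus a b la lb Ha Hb). Qed.
Lemma exs_scal (c : R) (a : nat -> R) : ex_series a -> ex_series (fun n => c * a n).
Proof. intros Ha. apply ex_series_ext with (fun n => a n * c). intro n; apply Rmult_comm. now apply ex_series_scal_r. Qed.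

Lemma cont_of_derive (f : R -> R) (x df : R) : is_derive f x df -> continuity_pt f x.
Proof. intros H. apply continuity_pt_filterlim. apply (ex_derive_continuous (K:=R_AbsRing) (V:=R_NormedModule)). exists df; exact H. Qed.

Lemma exp_ln_split (p t : R) : 0 < t -> exp (- (p - 1) * ln t) * / t = exp (- p * ln t).
Proof.
  intros Ht. rewrite <- (exp_ln t) at 2 by exact Ht. rewrite <- exp_Ropp, <- exp_plus. f_equal. ring.
Qed.

Lemma pser (y p : R) : 0 < y -> 1 < p -> ex_series (fun k => exp (- p * ln (INR k + y))).
Proof.
  intros Hy Hp.
  set (b := fun k : nat => exp (- (p - 1) * ln (INR k + y))).
  assert (Hb : forall k, 0 <= exp (- p * ln (INR (S k) + y)) <= (b k - b (S k)) / (p - 1)).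
  { intro k. split. left; apply exp_pos.
    pose proof (pos_INR k) as Hk. rewrite S_INR.
    destruct (MVT_gen (fun t => exp (- (p - 1) * ln t)) (INR k + y) (INR k + 1 + y)
      (fun t => - (p - 1) * exp (- p * ln t))) as [c [Hc Hm]].
    - intros t Ht. rewrite Rmin_left, Rmax_right in Ht by lra.
      rewrite <- (exp_ln_split p t) by lra.
      auto_derive. lra. ring.
    - intros t0 Ht. rewrite Rmin_left, Rmax_right in Ht by lra.
      eapply cont_of_derive. auto_derive. lra. reflexivity.
    - rewrite Rmin_left, Rmax_right in Hc by lra. unfold b. rewrite S_INR.
      simpl in Hm. replace (INR k + 1 + y - (INR k + y)) with 1 in Hm by ring.
      assert (exp (- p * ln (INR k + 1 + y)) <= exp (- p * ln c)).
      { apply exp_le_exp. assert (ln c <= ln (INR k + 1 + y)) by (apply ln_le_mono; lra). nra. }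
      replace (INR k + 1 + y) with (INR k + y + 1) in Hm |- * by ring.
      apply Rmult_le_reg_l with (p - 1). lra. unfold Rdiv.
      replace ((p - 1) * ((exp (- (p - 1) * ln (INR k + y)) - exp (- (p - 1) * ln (INR k + y + 1))) * / (p - 1)))
        with (exp (- (p - 1) * ln (INR k + y)) - exp (- (p - 1) * ln (INR k + y + 1))) by (field; lra).
      replace (INR k + 1 + y) with (INR k + y + 1) in H by ring. nra. }
  apply ex_series_incr_1.
  apply exs_le with (fun k => (b k - b (S k)) / (p - 1)).
  - intro n. rewrite Rabs_right by (apply Rle_ge, Hb). apply Hb.
  - apply ex_series_ext with (fun k => (b k - b (S k)) * / (p - 1)). intro; reflexivity.
    apply ex_series_scal_r. eexists. apply telescope.
    unfold b. apply exp_ln_lim; lra.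
Qed.

Lemma sum_pairs (c : nat -> R) K :
  sum_f_R0 c (S (2 * K)) = sum_f_R0 (fun k => c (2 * k)%nat + c (S (2 * k))) K.
Proof.
  induction K. simpl. ring.
  rewrite (tech5 _ K), <- IHK.
  replace (2 * S K)%nat with (S (S (2 * K))) by lia.
  rewrite !tech5. ring.
Qed.

Lemma pairing (c : nat -> R) Sm :
  is_series (fun k => c (2 * k)%nat + c (S (2 * k))) Sm -> is_lim_seq c 0 -> is_series c Sm.
Proof.
  intros HS Hc. apply is_series_Reals in HS. apply is_series_Reals. intros eps Heps.
  destruct (HS (eps / 2)) as [N1 HN1]. lra.
  apply is_lim_seq_spec in Hc. destruct (Hc (mkposreal (eps/2) ltac:(lra))) as [N2 HN2].
  exists (2 * N1 + N2 + 2)%nat. intros n Hn.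
  destruct (Nat.Even_or_Odd n) as [[K HK]|[K HK]].
  - destruct K as [|K]. lia.
    assert (E : sum_f_R0 c n = sum_f_R0 (fun k => c (2 * k)%nat + c (S (2 * k))) K + c (2 * S K)%nat).
    { subst n. replace (2 * S K)%nat with (S (S (2 * K))) by lia. rewrite tech5, sum_pairs. reflexivity. }
    rewrite E. unfold R_dist in *.
    specialize (HN1 K ltac:(lia)). specialize (HN2 (2 * S K)%nat ltac:(lia)). change (Rabs (c (2 * S K)%nat - 0) < eps/2) in HN2.
    rewrite Rminus_0_r in HN2.
    replace (sum_f_R0 (fun k : nat => c (2 * k)%nat + c (S (2 * k))) K + c (2 * S K)%nat - Sm)
      with ((sum_f_R0 (fun k : nat => c (2 * k)%nat + c (S (2 * k))) K - Sm) + c (2 * S K)%nat) by ring.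
    eapply Rle_lt_trans. apply Rabs_triang. lra.
  - subst n. replace (2 * K + 1)%nat with (S (2 * K)) by lia. rewrite sum_pairs.
    apply Rlt_trans with (eps/2). apply HN1. lia. lra.
Qed.

Lemma geo2 (r : R) : 0 < r < 1 -> ex_series (fun n => (INR n + 1) ^ 2 * r ^ n).
Proof.
  intros Hr. apply ex_series_Rabs. apply ex_series_DAlembert with r. lra.
  - intro n. apply Rmult_integral_contrapositive. split.
    apply pow_nonzero. pose proof (pos_INR n). lra. apply pow_nonzero. lra.
  - apply is_lim_seq_spec. intro eps.
    destruct (archimed (3 / eps)) as [H1 _].
    assert (0 < 3 / eps) by (unfold Rdiv; apply Rmult_lt_0_compat; [lra| apply Rinv_0_lt_compat, cond_pos]).
    exists (Z.to_nat (up (3 / eps))). intros n Hn.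
    apply le_INR in Hn. rewrite INR_IZR_INZ, Z2Nat.id in Hn by (apply le_IZR; lra).
    pose proof (pos_INR n) as Hp. pose proof (cond_pos eps) as He.
    rewrite S_INR.
    replace ((INR n + 1 + 1) ^ 2 * r ^ S n / ((INR n + 1) ^ 2 * r ^ n))
      with (r * ((INR n + 2) / (INR n + 1)) ^ 2).
    2:{ simpl. field. split. apply pow_nonzero; lra. lra. }
    rewrite (Rabs_right (r * _)).
    2:{ apply Rle_ge, Rmult_le_pos. lra. apply pow2_ge_0. }
    replace (r * ((INR n + 2) / (INR n + 1)) ^ 2 - r) with (r * (2 * INR n + 3) / (INR n + 1) ^ 2)
      by (field; lra).
    rewrite Rabs_right.
    2:{ apply Rle_ge. unfold Rdiv. apply Rmult_le_pos. nra. left; apply Rinv_0_lt_compat. nra. }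
    apply Rle_lt_trans with (3 / (INR n + 1)).
    + unfold Rdiv. apply Rmult_le_reg_r with ((INR n + 1)^2). nra.
      rewrite Rmult_assoc, Rinv_l by nra.
      replace (3 * / (INR n + 1) * (INR n + 1) ^ 2) with (3 * (INR n + 1)) by (field; lra). nra.
    + apply Rmult_lt_reg_r with (INR n + 1). lra. unfold Rdiv. rewrite Rmult_assoc, Rinv_l by lra.
      assert (3 / eps * eps = 3) by (field; lra).
      nra.
Qed.

Lemma Series_nonneg (a : nat -> R) : (forall n, 0 <= a n) -> ex_series a -> 0 <= Series a.
Proof.
  intros H E. replace 0 with (Series (fun n => 0 * a n)).
  apply Series_le; auto. intro n; rewrite Rmult_0_l; split; [lra|auto].
  rewrite Series_scal_l; ring.
Qed.

Lemma iss_ext (a b : nat -> R) l : (forall n, a n = b n) -> is_series a l -> is_series b l.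
Proof. intros H. apply is_series_ext. exact H. Qed.
Lemma exs_ext (a b : nat -> R) : (forall n, a n = b n) -> ex_series a -> ex_series b.
Proof. intros H. apply ex_series_ext. exact H. Qed.

Lemma minmax_in (a b z w x : R) : a < z < b -> a < w < b -> Rmin z w <= x <= Rmax z w -> a < x < b.
Proof. unfold Rmin, Rmax. destruct (Rle_dec z w); lra. Qed.

Lemma minmax_dist (z w x : R) : Rmin z w <= x <= Rmax z w -> Rabs (x - z) <= Rabs (w - z).
Proof. unfold Rmin, Rmax. destruct (Rle_dec z w); intros; unfold Rabs; repeat destruct Rcase_abs; lra. Qed.

Lemma taylor2 (u du d2u : R -> R) (a b z h Nk : R) :
  a < z < b -> a < z + h < b ->
  (forall w, a < w < b -> is_derive u w (du w)) ->
  (forall w, a < w < b -> is_derive du w (d2u w)) ->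
  (forall w, a < w < b -> Rabs (d2u w) <= Nk) ->
  Rabs (u (z + h) - u z - h * du z) <= h ^ 2 * Nk.
Proof.
  intros Hz Hzh Hu Hdu HN.
  destruct (MVT_gen u z (z + h) du) as [c [Hc Hm]].
  { intros x Hx. apply Hu. eapply minmax_in; [exact Hz| exact Hzh| lra]. }
  { intros x Hx. eapply cont_of_derive. apply Hu. eapply minmax_in; [exact Hz| exact Hzh| exact Hx]. }
  assert (Hcin : a < c < b) by (eapply minmax_in; [exact Hz| exact Hzh| exact Hc]).
  assert (Hcd : Rabs (c - z) <= Rabs h) by (pose proof (minmax_dist z (z + h) c Hc) as Hq; replace (z + h - z) with h in Hq by ring; exact Hq).
  destruct (MVT_gen du z c d2u) as [c' [Hc' Hm']].
  { intros x Hx. apply Hdu. eapply minmax_in. exact Hz. exact Hcin. lra. }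
  { intros x Hx. eapply cont_of_derive. apply Hdu. eapply minmax_in. exact Hz. exact Hcin. exact Hx. }
  assert (Hc'in : a < c' < b) by (eapply minmax_in; [exact Hz|exact Hcin|exact Hc']).
  replace (u (z + h) - u z - h * du z) with (h * (du c - du z)) by (rewrite Hm; ring).
  rewrite Hm'. rewrite !Rabs_mult.
  pose proof (HN c' Hc'in). pose proof (Rabs_pos h). pose proof (Rabs_pos (c - z)). pose proof (Rabs_pos (d2u c')).
  replace (h ^ 2) with (Rabs h * Rabs h) by (rewrite <- Rabs_mult; simpl; rewrite Rmult_1_r; apply Rabs_right; nra).
  apply Rle_trans with (Rabs h * (Rabs (d2u c') * Rabs h)).
  apply Rmult_le_compat_l; auto. apply Rmult_le_compat_l; auto.
  nra.
Qed.

Lemma L1 (u du d2u : nat -> R -> R) (a b z : R) (M N : nat -> R) :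
  a < z < b ->
  (forall k w, a < w < b -> is_derive (u k) w (du k w)) ->
  (forall k w, a < w < b -> is_derive (du k) w (d2u k w)) ->
  (forall k w, a < w < b -> Rabs (du k w) <= M k) ->
  (forall k w, a < w < b -> Rabs (d2u k w) <= N k) ->
  ex_series M -> ex_series N ->
  (forall w, a < w < b -> ex_series (fun k => u k w)) ->
  is_derive (fun w => Series (fun k => u k w)) z (Series (fun k => du k z)).
Proof.
  intros Hz Hu Hdu HM HN EM EN Eu.
  assert (EdU : ex_series (fun k => du k z)) by (apply exs_le with M; auto).
  assert (HN0 : forall k, 0 <= N k) by (intro k; eapply Rle_trans; [apply Rabs_pos| apply (HN k z Hz)]).
  assert (SN0 : 0 <= Series N) by (apply Series_nonneg; auto).
  apply is_derive_Reals. intros eps Heps.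
  assert (Hd : 0 < Rmin (Rmin (z - a) (b - z)) (eps / (Series N + 1))).
  { apply Rmin_glb_lt. apply Rmin_glb_lt; lra. apply Rdiv_lt_0_compat; lra. }
  exists (mkposreal _ Hd). intros h Hh0 Hh. simpl in Hh.
  assert (Hh1 : Rabs h < z - a /\ Rabs h < b - z /\ Rabs h < eps / (Series N + 1)).
  { pose proof (Rmin_l (Rmin (z - a) (b - z)) (eps / (Series N + 1))).
    pose proof (Rmin_r (Rmin (z - a) (b - z)) (eps / (Series N + 1))).
    pose proof (Rmin_l (z - a) (b - z)). pose proof (Rmin_r (z - a) (b - z)). lra. }
  assert (Hzh : a < z + h < b) by (unfold Rabs in Hh1; destruct Rcase_abs; lra).
  set (r := fun k => u k (z + h) - u k z - h * du k z).
  assert (Hr : forall k, Rabs (r k) <= h ^ 2 * N k).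
  { intro k. unfold r. eapply taylor2; eauto. }
  assert (Er : ex_series (fun k => Rabs (r k))).
  { apply exs_le with (fun k => h ^ 2 * N k). intro k. rewrite Rabs_Rabsolu; auto. apply exs_scal; auto. }
  assert (ES : Series (fun k => u k (z + h)) - Series (fun k => u k z) - h * Series (fun k => du k z) = Series r).
  { unfold r. rewrite Series_minus, Series_minus, Series_scal_l; auto.
    apply exs_minus; auto. apply exs_scal; auto. }
  assert (Hb : Rabs (Series r) <= h ^ 2 * Series N).
  { eapply Rle_trans. apply Series_Rabs; auto. rewrite <- Series_scal_l. apply Series_le.
    intro k. split. apply Rabs_pos. apply Hr. apply exs_scal; auto. }
  replace ((Series (fun k => u k (z + h)) - Series (fun k => u k z)) / h - Series (fun k => du k z))
    with (Series r / h) by (rewrite <- ES; field; auto).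
  unfold Rdiv. rewrite Rabs_mult, Rabs_Rinv by auto.
  assert (0 < Rabs h) by (apply Rabs_pos_lt; auto).
  apply Rmult_le_compat_r with (r := / Rabs h) in Hb; [|left; apply Rinv_0_lt_compat; auto].
  eapply Rle_lt_trans. exact Hb.
  replace (h ^ 2 * Series N * / Rabs h) with (Rabs h * Series N).
  2:{ replace (h ^ 2) with (Rabs h * Rabs h). field. lra. rewrite <- Rabs_mult. simpl. rewrite Rmult_1_r. apply Rabs_right. nra. }
  destruct Hh1 as [_ [_ Hh2]].
  apply Rle_lt_trans with (eps / (Series N + 1) * Series N). apply Rmult_le_compat_r; lra.
  apply Rmult_lt_reg_r with (Series N + 1). lra.
  unfold Rdiv. replace (eps * / (Series N + 1) * Series N * (Series N + 1)) with (eps * Series N) by (field; lra).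
  nra.
Qed.

Definition phi (r : nat) (w t : R) : R := (- ln t) ^ r * exp (- w * ln t).
Definition ak (k : nat) (y : R) : R := 2 * INR k + y.
Definition U (r : nat) (w y : R) (k : nat) : R := phi r w (ak k y) - phi r w (ak k y + 1).

Lemma phi_derive_w r w t : is_derive (fun s => phi r s t) w (phi (S r) w t).
Proof. unfold phi. auto_derive. auto. simpl. ring. Qed.

Lemma U_derive_w r w y k : is_derive (fun s => U r s y k) w (U (S r) w y k).
Proof.
  unfold U. apply (is_derive_minus (fun s => phi r s (ak k y)) (fun s => phi r s (ak k y + 1))); apply phi_derive_w.
Qed.

Lemma alt_lim (f : nat -> R) : is_lim_seq f 0 -> is_lim_seq (fun n => (-1) ^ n * f n) 0.
Proof.
  intros H. apply is_lim_seq_spec in H. apply is_lim_seq_spec. intro eps.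
  destruct (H eps) as [N HN]. exists N. intros n Hn. specialize (HN n Hn).
  rewrite Rminus_0_r in *. rewrite Rabs_mult, pow_1_abs, Rmult_1_l. exact HN.
Qed.



Lemma ak_pos k y : 0 < y -> 0 < ak k y.
Proof. intros. unfold ak. pose proof (pos_INR k). lra. Qed.

Lemma pser2 p y : 0 < y -> 1 < p -> ex_series (fun k => exp (- p * ln (ak k y))).
Proof.
  intros Hy Hp. apply exs_le with (fun k => exp (- p * ln (INR k + y))).
  - intro k. rewrite Rabs_right by (left; apply exp_pos). apply exp_le_exp.
    assert (ln (INR k + y) <= ln (ak k y)). apply ln_le_mono. pose proof (pos_INR k); lra.
    unfold ak; pose proof (pos_INR k); lra. nra.
  - apply pser; lra.
Qed.

Lemma lnexp_bound p s d c a : 0 < a <= c -> 0 < d -> d < s ->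
  Rabs (ln c) ^ p * exp (- s * ln c) <= INR (fact p) / d ^ p * (exp (- (s - d) * ln a) + exp (- (s + d) * ln a)).
Proof.
  intros Hac Hd Hs.
  pose proof (ln_pow_bound c d p ltac:(lra) Hd) as H.
  assert (HK : 0 <= INR (fact p) / d ^ p).
  { unfold Rdiv. apply Rmult_le_pos. apply pos_INR. left; apply Rinv_0_lt_compat, pow_lt; lra. }
  assert (Hl : ln a <= ln c) by (apply ln_le_mono; lra).
  assert (E1 : exp (d * ln c) * exp (- s * ln c) = exp (- (s - d) * ln c)) by (rewrite <- exp_plus; f_equal; ring).
  assert (E2 : exp (- d * ln c) * exp (- s * ln c) = exp (- (s + d) * ln c)) by (rewrite <- exp_plus; f_equal; ring).
  assert (F1 : exp (- (s - d) * ln c) <= exp (- (s - d) * ln a)) by (apply exp_le_exp; nra).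
  assert (F2 : exp (- (s + d) * ln c) <= exp (- (s + d) * ln a)) by (apply exp_le_exp; nra).
  pose proof (exp_pos (- s * ln c)).
  apply Rmult_le_compat_r with (r := exp (- s * ln c)) in H; [|lra].
  eapply Rle_trans. exact H.
  rewrite Rmult_assoc, Rmult_plus_distr_r, E1, E2.
  apply Rmult_le_compat_l; lra.
Qed.

Definition Kc (p : nat) (d : R) : R := INR (fact p) / d ^ p.
Definition Bd (r : nat) (z0 z1 : R) : R := INR r * Kc (pred r) (z0 / 2) + z1 * Kc r (z0 / 2).
Definition G (z0 z1 y : R) (k : nat) : R :=
  let a := ak k y in let d := z0 / 2 in
  exp (- (z0 + 1 - d) * ln a) + exp (- (z1 + 1 - d) * ln a) + exp (- (z0 + 1 + d) * ln a) + exp (- (z1 + 1 + d) * ln a).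

Lemma Kc_nonneg p d : 0 < d -> 0 <= Kc p d.
Proof. intros. unfold Kc, Rdiv. apply Rmult_le_pos. apply pos_INR. left; apply Rinv_0_lt_compat, pow_lt; lra. Qed.

Lemma G_ex z0 z1 y : 0 < z0 <= z1 -> 0 < y -> ex_series (G z0 z1 y).
Proof.
  intros Hz Hy. unfold G.
  repeat apply exs_plus; apply pser2; lra.
Qed.

Lemma G_nonneg z0 z1 y k : 0 <= G z0 z1 y k.
Proof. unfold G. pose proof exp_pos. repeat apply Rplus_le_le_0_compat; left; apply exp_pos. Qed.

Lemma phi_derive_t r w t : 0 < t ->
  is_derive (phi r w) t (- (INR r * (- ln t) ^ (pred r) + w * (- ln t) ^ r) * exp (- (w + 1) * ln t)).
Proof.
  intros Ht. rewrite <- (exp_ln_split (w + 1) t) by lra. replace (w + 1 - 1) with w by ring.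
  unfold phi. auto_derive. lra. ring.
Qed.

Lemma U_bound r w y z0 z1 k : 0 < z0 <= w -> w <= z1 -> 0 < y ->
  Rabs (U r w y k) <= Bd r z0 z1 * G z0 z1 y k.
Proof.
  intros Hz Hz1 Hy.
  set (a := ak k y). assert (Ha : 0 < a) by (apply ak_pos; auto).
  set (df := fun t => - (INR r * (- ln t) ^ (pred r) + w * (- ln t) ^ r) * exp (- (w + 1) * ln t)).
  destruct (MVT_gen (phi r w) a (a + 1) df) as [c [Hc Hm]].
  { intros t Ht. rewrite Rmin_left, Rmax_right in Ht by lra. apply phi_derive_t. lra. }
  { intros t Ht. rewrite Rmin_left, Rmax_right in Ht by lra. eapply cont_of_derive. apply phi_derive_t. lra. }
  rewrite Rmin_left, Rmax_right in Hc by lra.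
  replace (a + 1 - a) with 1 in Hm by ring.
  assert (HU : U r w y k = - df c) by (unfold U; fold a; lra).
  rewrite HU, Rabs_Ropp. unfold df.
  set (d := z0 / 2).
  assert (Hd : 0 < d) by (unfold d; lra).
  assert (Hs : d < w + 1) by (unfold d; lra).
  assert (Hac : 0 < a <= c) by lra.
  set (X := exp (- (w + 1 - d) * ln a) + exp (- (w + 1 + d) * ln a)).
  assert (HX : X <= G z0 z1 y k).
  { unfold X, G. fold a. fold d.
    assert (exp (- (w + 1 - d) * ln a) <= exp (- (z0 + 1 - d) * ln a) + exp (- (z1 + 1 - d) * ln a)).
    { rewrite (Rplus_comm (exp (- (z0 + 1 - d) * ln a))); apply exp_ln_interp; lra. }
    assert (exp (- (w + 1 + d) * ln a) <= exp (- (z0 + 1 + d) * ln a) + exp (- (z1 + 1 + d) * ln a)).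
    { rewrite (Rplus_comm (exp (- (z0 + 1 + d) * ln a))); apply exp_ln_interp; lra. }
    lra. }
  assert (HX0 : 0 <= X) by (unfold X; pose proof (exp_pos (- (w + 1 - d) * ln a)); pose proof (exp_pos (- (w + 1 + d) * ln a)); lra).
  pose proof (lnexp_bound (pred r) (w + 1) d c a Hac Hd Hs) as B1.
  pose proof (lnexp_bound r (w + 1) d c a Hac Hd Hs) as B2.
  fold X in B1, B2. fold (Kc (pred r) d) in B1. fold (Kc r d) in B2.
  pose proof (Kc_nonneg (pred r) d Hd). pose proof (Kc_nonneg r d Hd).
  pose proof (pos_INR r). pose proof (exp_pos (- (w + 1) * ln c)).
  rewrite Rabs_mult, Rabs_Ropp, (Rabs_right (exp _)) by (left; apply exp_pos).
  eapply Rle_trans.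
  { apply Rmult_le_compat_r. lra. apply Rabs_triang. }
  rewrite !Rabs_mult, <- !RPow_abs, !Rabs_Ropp, (Rabs_right (INR r)), (Rabs_right w) by lra.
  unfold Bd. fold d.
  assert (T1 : INR r * Rabs (ln c) ^ pred r * exp (- (w + 1) * ln c) <= INR r * Kc (pred r) d * X).
  { rewrite Rmult_assoc, Rmult_assoc. apply Rmult_le_compat_l; lra. }
  assert (T2 : w * Rabs (ln c) ^ r * exp (- (w + 1) * ln c) <= z1 * Kc r d * X).
  { rewrite Rmult_assoc, Rmult_assoc. apply Rmult_le_compat. lra.
    apply Rmult_le_pos. apply pow_le, Rabs_pos. lra. lra. lra. }
  apply Rle_trans with ((INR r * Kc (pred r) d + z1 * Kc r d) * X).
  { nra. }
  apply Rmult_le_compat_l. nra. exact HX.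
Qed.

Lemma U_ex r w y : 0 < w -> 0 < y -> ex_series (U r w y).
Proof.
  intros Hw Hy. apply exs_le with (fun k => Bd r w w * G w w y k).
  intro k. apply U_bound; lra. apply exs_scal, G_ex; lra.
Qed.

Lemma zetaE_pairs w y : 0 < w -> 0 < y -> is_series (fun n => (-1) ^ n * Rpower (INR n + y) (- w)) (Series (U 0 w y)).
Proof.
  intros Hw Hy. apply pairing.
  - apply iss_ext with (U 0 w y).
    + intro k. unfold U, phi, ak, Rpower.
      replace ((-1)^(2*k)%nat) with 1 by (rewrite pow_1_even; auto).
      replace ((-1)^S (2*k)%nat) with (-1) by (rewrite <- tech_pow_Rmult, pow_1_even; ring).
      rewrite S_INR, mult_INR. replace (INR 2) with 2 by (simpl; ring). simpl pow.
      replace (2 * INR k + 1 + y) with (2 * INR k + y + 1) by ring. ring.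
    + apply Series_correct. apply U_ex; auto.
  - apply alt_lim. unfold Rpower. apply is_lim_seq_ext with (fun n => exp (- w * ln (INR n + y))).
    intro; f_equal; ring. apply exp_ln_lim; lra.
Qed.

Theorem zeta_deriv r : forall w y, 0 < w -> 0 < y ->
  Derive_n (fun s => zetaE s y) r w = Series (U r w y).
Proof.
  induction r as [|r IH]; intros w y Hw Hy.
  - simpl. unfold zetaE. apply is_series_unique. apply zetaE_pairs; auto.
  - change (Derive (Derive_n (fun s => zetaE s y) r) w = Series (U (S r) w y)).
    rewrite (Derive_ext_loc _ (fun s => Series (U r s y))).
    + apply is_derive_unique.
      apply (L1 (fun k s => U r s y k) (fun k s => U (S r) s y k) (fun k s => U (S (S r)) s y k)
               (w / 2) (2 * w) w
               (fun k => Bd (S r) (w / 2) (2 * w) * G (w / 2) (2 * w) y k)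
               (fun k => Bd (S (S r)) (w / 2) (2 * w) * G (w / 2) (2 * w) y k)).
      * lra.
      * intros k s Hs. apply U_derive_w.
      * intros k s Hs. apply U_derive_w.
      * intros k s Hs. apply U_bound; lra.
      * intros k s Hs. apply U_bound; lra.
      * apply exs_scal, G_ex; lra.
      * apply exs_scal, G_ex; lra.
      * intros s Hs. apply U_ex; lra.
    + eapply filter_imp; [| apply (open_gt 0 w Hw)]. intros t Ht. apply IH; auto.
Qed.

Lemma isd_plus (f g : R -> R) (x df dg : R) : is_derive f x df -> is_derive g x dg ->
  is_derive (fun t => f t + g t) x (df + dg).
Proof. intros. apply (is_derive_plus f g x df dg); auto. Qed.
Lemma isd_mult (f g : R -> R) (x df dg : R) : is_derive f x df -> is_derive g x dg ->
  is_derive (fun t => f t * g t) x (df * g x + f x * dg).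
Proof. intros. apply (is_derive_mult f g x df dg); auto. intros; apply Rmult_comm. Qed.
Lemma isd_val (f : R -> R) (x l l' : R) : l = l' -> is_derive f x l -> is_derive f x l'.
Proof. intros ->; auto. Qed.
Lemma isd_ext (f g : R -> R) (x l : R) : (forall t, f t = g t) -> is_derive f x l -> is_derive g x l.
Proof. intros H. apply is_derive_ext. exact H. Qed.

Lemma isd_sum (f df : nat -> R -> R) x n :
  (forall c, is_derive (f c) x (df c x)) ->
  is_derive (fun t => sum_f_R0 (fun c => f c t) n) x (sum_f_R0 (fun c => df c x) n).
Proof.
  intros H. induction n. simpl. apply H.
  simpl. apply isd_plus; auto.
Qed.

Lemma stirling_abs n : forall k, Rabs (stirling1 n k) <= INR (fact n).
Proof.
  induction n as [|n IH]; intros [|k]; simpl stirling1.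
  - simpl. rewrite Rabs_R1. lra.
  - rewrite Rabs_R0. simpl; lra.
  - rewrite Rabs_R0. apply pos_INR.
  - rewrite fact_simpl, mult_INR, S_INR.
    eapply Rle_trans. apply Rabs_triang. rewrite Rabs_Ropp, Rabs_mult, (Rabs_right (INR n)) by (apply Rle_ge, pos_INR).
    pose proof (IH k). pose proof (IH (S k)). pose proof (pos_INR n). nra.
Qed.

Lemma C_fact_shift l c : (c < l)%nat ->
  Binomial.C l (S c) * INR (fact (S c)) = Binomial.C l c * INR (fact c) * INR (l - c).
Proof.
  intros H. unfold Binomial.C.
  replace (l - c)%nat with (S (l - S c)) by lia.
  rewrite !fact_simpl, !mult_INR.
  pose proof (INR_fact_neq_0 c). pose proof (INR_fact_neq_0 (l - S c)).
  assert (INR (S c) <> 0) by (apply not_0_INR; lia).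
  assert (INR (S (l - S c)) <> 0) by (apply not_0_INR; lia).
  field. auto.
Qed.

Lemma C_nonneg l c : 0 <= Binomial.C l c.
Proof.
  unfold Binomial.C. apply Rmult_le_pos. apply pos_INR. left. apply Rinv_0_lt_compat.
  apply Rmult_lt_0_compat; apply INR_fact_lt_0.
Qed.

Lemma stirling_rec n k : stirling1 (S n) (S k) = stirling1 n k - INR n * stirling1 n (S k).
Proof. reflexivity. Qed.

Definition cf (l m c : nat) : R := Binomial.C l c * (-1) ^ c * INR (fact c) * stirling1 (S m) (S c).
Definition Pm (l m : nat) (t : R) : R := sum_f_R0 (fun c => cf l m c * (- ln t) ^ (l - c)) l.
Definition Dm (l m : nat) (t : R) : R := Pm l m t * / t ^ (S m).

Lemma sum_shift (A B : nat -> R) l : B O = 0 -> (forall c, (c < l)%nat -> B (S c) = A c) -> A l = 0 ->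
  sum_f_R0 B l = sum_f_R0 A l.
Proof.
  intros H0 HS Hl. destruct l as [|l]. simpl. rewrite H0, Hl. auto.
  rewrite decomp_sum by lia. rewrite tech5, Hl, H0. simpl pred.
  rewrite Rplus_0_l, Rplus_0_r. apply sum_eq. intros i Hi. apply HS. lia.
Qed.

Lemma Pm_derive l m t : 0 < t ->
  is_derive (Pm l m) t (sum_f_R0 (fun c => cf l m c * (INR (l - c) * (- ln t) ^ (pred (l - c)) * (- / t))) l).
Proof.
  intros Ht. unfold Pm.
  apply (isd_sum (fun c t => cf l m c * (- ln t) ^ (l - c))
                 (fun c t => cf l m c * (INR (l - c) * (- ln t) ^ (pred (l - c)) * (- / t)))).
  intro c. auto_derive. lra. ring.
Qed.

Lemma Dm_derive l m t : 0 < t -> is_derive (Dm l m) t (Dm l (S m) t).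
Proof.
  intros Ht.
  set (L := - ln t).
  set (A := fun c => - (cf l m c * INR (l - c) * L ^ (pred (l - c)))).
  set (B := fun c => Binomial.C l c * (-1) ^ c * INR (fact c) * stirling1 (S m) c * L ^ (l - c)).
  assert (HAB : sum_f_R0 B l = sum_f_R0 A l).
  { apply sum_shift.
    - unfold B. simpl stirling1. ring.
    - intros c Hc. unfold A, B, cf.
      replace (pred (l - c)) with (l - S c)%nat by lia.
      rewrite <- tech_pow_Rmult.
      replace (Binomial.C l (S c) * (-1 * (-1) ^ c) * INR (fact (S c)))
        with (- (Binomial.C l (S c) * INR (fact (S c))) * (-1) ^ c) by ring.
      rewrite C_fact_shift by auto. ring.
    - unfold A. rewrite Nat.sub_diag. simpl. ring. }
  assert (HP1 : sum_f_R0 (fun c => cf l m c * (INR (l - c) * (- ln t) ^ (pred (l - c)) * (- / t))) l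
               = / t * sum_f_R0 A l).
  { rewrite scal_sum. apply sum_eq. intros i _. unfold A. fold L. ring. }
  assert (HP2 : Pm l (S m) t = sum_f_R0 A l - INR (S m) * Pm l m t).
  { rewrite <- HAB. unfold Pm. fold L. rewrite scal_sum, <- minus_sum. apply sum_eq. intros i _.
    unfold B, cf. rewrite (stirling_rec (S m) i). ring. }
  assert (HI : is_derive (fun t => / t ^ (S m)) t (- INR (S m) * / t ^ (S (S m)))).
  { auto_derive. assert (0 < t * t ^ m) by (apply Rmult_lt_0_compat; [lra| apply pow_lt; lra]); lra. change (match m with | 0%nat => 1 | S _ => INR m + 1 end) with (INR (S m)). rewrite <- !tech_pow_Rmult. field. split; [apply pow_nonzero; lra | lra]. }
  unfold Dm at 1.
  eapply isd_val. 2:{ apply isd_mult. apply Pm_derive; auto. exact HI. }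
  cbv beta. rewrite HP1. unfold Dm. rewrite HP2. rewrite <- !tech_pow_Rmult. field. split. apply pow_nonzero; lra. lra.
Qed.

Definition FT (l : nat) (X : R) (M : nat) (t : R) : R :=
  sum_f_R0 (fun m => Dm l m t * (X - t) ^ m / INR (fact m)) M.

Lemma powdiv_derive X M t : is_derive (fun s => (X - s) ^ (S M) / INR (fact (S M))) t (- INR (S M) * (X - t) ^ M / INR (fact (S M))).
Proof.
  auto_derive. auto.
  change (match M with | 0%nat => 1 | S _ => INR M + 1 end) with (INR (S M)).
  change (fact M + M * fact M)%nat with (fact (S M)).
  match goal with |- ?a = ?b => change (@eq R a b) end. unfold Rminus, Rdiv. ring.
Qed.

Lemma FT_derive l X M t : 0 < t -> is_derive (FT l X M) t (Dm l (S M) t * (X - t) ^ M / INR (fact M)).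
Proof.
  intros Ht. induction M as [|M IH].
  - eapply isd_val. 2:{ apply (isd_ext (Dm l 0)). intro s. unfold FT. simpl. field. apply Dm_derive; auto. }
    simpl. field.
  - eapply isd_ext with (f := fun s => FT l X M s + Dm l (S M) s * ((X - s) ^ (S M) / INR (fact (S M)))).
    { intro s. unfold FT. rewrite (tech5 _ M). unfold Rdiv. ring. }
    eapply isd_val. 2:{ apply isd_plus. exact IH. apply isd_mult. apply Dm_derive; auto.
       apply powdiv_derive. }
    rewrite fact_simpl, mult_INR. field. split. apply INR_fact_neq_0. apply not_0_INR; lia.
Qed.

Lemma FT_at_X l X M : FT l X M X = Dm l 0 X.
Proof.
  induction M. unfold FT. simpl. field.
  unfold FT in *. rewrite tech5, IHM. rewrite Rminus_diag, pow_i by lia. unfold Rdiv. ring.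
Qed.

Definition Lam (l : nat) (lam : R) : R := sum_f_R0 (fun c => Binomial.C l c * INR (fact c) * lam ^ (l - c)) l.

Lemma Pm_bound l m t lam : 0 < t -> Rabs (ln t) <= lam ->
  Rabs (Pm l m t) <= INR (fact (S m)) * Lam l lam.
Proof.
  intros Ht Hl. unfold Pm, Lam. rewrite scal_sum.
  eapply Rle_trans. apply Rabs_triang_gen. apply sum_Rle. intros c _.
  unfold cf. rewrite !Rabs_mult, pow_1_abs, <- RPow_abs, Rabs_Ropp.
  rewrite (Rabs_right (Binomial.C l c)) by (apply Rle_ge, C_nonneg).
  rewrite (Rabs_right (INR (fact c))) by (apply Rle_ge, pos_INR).
  pose proof (C_nonneg l c). pose proof (pos_INR (fact c)).
  pose proof (stirling_abs (S m) (S c)).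
  assert (Rabs (ln t) ^ (l - c) <= lam ^ (l - c)) by (apply pow_incr; split; [apply Rabs_pos| auto]).
  pose proof (pow_le (Rabs (ln t)) (l - c) (Rabs_pos _)).
  pose proof (Rabs_pos (stirling1 (S m) (S c))).
  rewrite Rmult_1_r.
  replace (Binomial.C l c * INR (fact c) * lam ^ (l - c) * INR (fact (S m)))
    with ((Binomial.C l c * INR (fact c)) * (INR (fact (S m)) * lam ^ (l - c))) by ring.
  replace (Binomial.C l c * INR (fact c) * Rabs (stirling1 (S m) (S c)) * Rabs (ln t) ^ (l - c))
    with ((Binomial.C l c * INR (fact c)) * (Rabs (stirling1 (S m) (S c)) * Rabs (ln t) ^ (l - c))) by ring.
  apply Rmult_le_compat_l. nra. apply Rmult_le_compat; auto.
Qed.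

Lemma mvt_range A x t : Rmin A (A + x) <= t <= Rmax A (A + x) -> A - Rabs x <= t <= A + Rabs x.
Proof. unfold Rmin, Rmax, Rabs. destruct (Rle_dec A (A + x)); destruct (Rcase_abs x); lra. Qed.

Lemma dist_ratio A x c : 0 < A -> Rabs x < A -> Rmin A (A + x) <= c <= Rmax A (A + x) ->
  Rabs (A + x - c) <= Rabs x / A * c.
Proof.
  intros HA Hx Hc. unfold Rmin, Rmax in Hc.
  apply Rmult_le_reg_r with A. lra. unfold Rdiv.
  replace (Rabs x * / A * c * A) with (Rabs x * c) by (field; lra).
  unfold Rabs in *. destruct (Rle_dec A (A + x)); repeat destruct Rcase_abs; nra.
Qed.

Definition lamb (A x : R) : R := Rabs (ln (A - Rabs x)) + Rabs (ln (A + Rabs x)).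

Lemma ln_in_range A x c : 0 < A - Rabs x -> A - Rabs x <= c <= A + Rabs x -> Rabs (ln c) <= lamb A x.
Proof.
  intros H Hc. unfold lamb.
  assert (ln (A - Rabs x) <= ln c) by (apply ln_le_mono; lra).
  assert (ln c <= ln (A + Rabs x)) by (apply ln_le_mono; lra).
  revert H0 H1. generalize (ln (A - Rabs x)) (ln (A + Rabs x)) (ln c). intros u v w H0 H1. unfold Rabs. repeat destruct Rcase_abs; lra.
Qed.

Lemma taylor_rem l A x M : 0 < A -> Rabs x < A ->
  Rabs (Dm l 0 (A + x) - FT l (A + x) M A)
  <= INR (S (S M)) * INR (S M) * Lam l (lamb A x) * (Rabs x / A) ^ M * Rabs x / (A - Rabs x) ^ 2.
Proof.
  intros HA Hx.
  set (X := A + x).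
  destruct (MVT_gen (FT l X M) A X (fun t => Dm l (S M) t * (X - t) ^ M / INR (fact M))) as [c [Hc Hm]].
  { intros t Ht. apply FT_derive. pose proof (mvt_range A x t ltac:(unfold X in Ht; lra)). lra. }
  { intros t Ht. eapply cont_of_derive. apply FT_derive. pose proof (mvt_range A x t Ht). lra. }
  pose proof (mvt_range A x c Hc) as Hcr.
  assert (Hc0 : 0 < c) by lra.
  rewrite FT_at_X in Hm. rewrite Hm. unfold X. replace (A + x - A) with x by ring. fold X.
  set (rho := Rabs x / A).
  assert (Hrho : 0 <= rho) by (unfold rho; apply Rmult_le_pos; [apply Rabs_pos| left; apply Rinv_0_lt_compat; lra]).
  set (Lm := Lam l (lamb A x)).
  assert (Q1 : Rabs (Dm l (S M) c) <= INR (fact (S (S M))) * Lm * / c ^ (S (S M))).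
  { unfold Dm. rewrite Rabs_mult, Rabs_Rinv, (Rabs_right (c ^ S (S M))) by (try apply Rle_ge; try apply pow_nonzero; try (left; apply pow_lt); lra).
    apply Rmult_le_compat_r. left; apply Rinv_0_lt_compat, pow_lt; lra.
    apply Pm_bound. lra. apply ln_in_range; lra. }
  assert (Q2 : Rabs (X - c) ^ M <= rho ^ M * c ^ M).
  { rewrite <- Rpow_mult_distr. apply pow_incr. split. apply Rabs_pos. apply dist_ratio; auto. }
  assert (HLm : 0 <= Lm).
  { pose proof (Rabs_pos (Dm l (S M) c)). assert (0 < / c ^ (S (S M))) by (apply Rinv_0_lt_compat, pow_lt; lra).
    assert (0 < INR (fact (S (S M)))) by apply INR_fact_lt_0.
    destruct (Rle_lt_dec 0 Lm); auto. exfalso. assert (INR (fact (S (S M))) * Lm < 0) by nra. nra. }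
  rewrite Rabs_mult. unfold Rdiv. rewrite !Rabs_mult, <- RPow_abs, Rabs_Rinv, (Rabs_right (INR (fact M)))
    by (try apply Rle_ge, pos_INR; apply INR_fact_neq_0).
  assert (Hf : 0 < / INR (fact M)) by (apply Rinv_0_lt_compat, INR_fact_lt_0).
  apply Rle_trans with ((INR (fact (S (S M))) * Lm * / c ^ (S (S M))) * (rho ^ M * c ^ M) * / INR (fact M) * Rabs x).
  { apply Rmult_le_compat_r. apply Rabs_pos. apply Rmult_le_compat_r. lra.
    apply Rmult_le_compat; auto using Rabs_pos, pow_le. }
  replace ((INR (fact (S (S M))) * Lm * / c ^ (S (S M))) * (rho ^ M * c ^ M) * / INR (fact M) * Rabs x)
    with (INR (S (S M)) * INR (S M) * Lm * rho ^ M * Rabs x * / c ^ 2).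
  2:{ rewrite !fact_simpl, !mult_INR. replace (S (S M)) with (M + 2)%nat at 3 by lia. rewrite pow_add.
      field. repeat split; first [apply INR_fact_neq_0 | apply pow_nonzero; lra | lra]. }
  assert (0 <= INR (S (S M)) * INR (S M) * Lm * rho ^ M * Rabs x).
  { repeat apply Rmult_le_pos; auto using pos_INR, pow_le, Rabs_pos. }
  apply Rmult_le_compat_l; auto.
  apply Rinv_le_contravar. apply pow_lt; lra. apply pow_incr; lra.
Qed.

Lemma poly_lim r : 0 <= r < 1 -> is_lim_seq (fun M => INR (S (S M)) * INR (S M) * r ^ M) 0.
Proof.
  intros Hr. set (r' := (r + 1) / 2).
  apply is_lim_seq_le_le with (u := fun _ => 0) (w := fun M => 2 * ((INR M + 1) ^ 2 * r' ^ M)).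
  - intro M. rewrite !S_INR. pose proof (pos_INR M).
    assert (r ^ M <= r' ^ M) by (apply pow_incr; unfold r'; lra).
    assert (0 <= r ^ M) by (apply pow_le; lra).
    split. apply Rmult_le_pos; [nra| auto].
    replace (2 * ((INR M + 1) ^ 2 * r' ^ M)) with ((2 * (INR M + 1) ^ 2) * r' ^ M) by ring.
    apply Rmult_le_compat; nra.
  - apply is_lim_seq_const.
  - replace (Finite 0) with (Rbar_mult 2 0) by (simpl; f_equal; ring).
    apply is_lim_seq_scal_l. apply ex_series_lim_0. apply geo2. unfold r'; lra.
Qed.

Lemma taylor_series l A x : 0 < A -> Rabs x < A ->
  is_series (fun m => Dm l m A * x ^ m / INR (fact m)) (Dm l 0 (A + x)).
Proof.
  intros HA Hx. apply is_series_Reals. intros eps Heps.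
  assert (Hr : 0 <= Rabs x / A < 1).
  { split. apply Rmult_le_pos; [apply Rabs_pos| left; apply Rinv_0_lt_compat; lra].
    apply Rmult_lt_reg_r with A. lra. unfold Rdiv. rewrite Rmult_assoc, Rinv_l; lra. }
  pose proof (poly_lim _ Hr) as HL.
  set (K := Lam l (lamb A x) * Rabs x / (A - Rabs x) ^ 2).
  apply (is_lim_seq_scal_r _ K) in HL.
  assert (E0 : Rbar_mult (Finite 0) (Finite K) = Finite 0) by (simpl; f_equal; ring). rewrite E0 in HL.
  apply is_lim_seq_spec in HL. destruct (HL (mkposreal eps Heps)) as [N HN].
  exists N. intros n Hn. specialize (HN n Hn). cbv beta in HN. change (pos (mkposreal eps Heps)) with eps in HN.
  unfold R_dist.
  replace (sum_f_R0 (fun m => Dm l m A * x ^ m / INR (fact m)) n) with (FT l (A + x) n A).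
  2:{ unfold FT. apply sum_eq. intros i _. replace (A + x - A) with x by ring. auto. }
  rewrite Rabs_minus_sym. eapply Rle_lt_trans. apply taylor_rem; auto.
  eapply Rle_lt_trans. 2: exact HN. rewrite Rminus_0_r.
  eapply Rle_trans. 2: apply Rle_abs. unfold K. right. unfold Rdiv. ring.
Qed.

Lemma series_abs_le (a c : nat -> R) : (forall n, Rabs (a n) <= c n) -> ex_series c -> Rabs (Series a) <= Series c.
Proof.
  intros H E. eapply Rle_trans. apply Series_Rabs. apply exs_le with c; auto. intro n; rewrite Rabs_Rabsolu; auto.
  apply Series_le; auto. intro n; split; auto using Rabs_pos.
Qed.

Lemma exs_sum (b : nat -> nat -> R) n : (forall i, ex_series (fun k => b k i)) ->
  ex_series (fun k => sum_f_R0 (fun i => b k i) n).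
Proof.
  intros H. induction n. simpl. apply H. simpl. apply exs_plus; auto.
Qed.

Lemma Series_sum_swap (b : nat -> nat -> R) n : (forall i, ex_series (fun k => b k i)) ->
  Series (fun k => sum_f_R0 (fun i => b k i) n) = sum_f_R0 (fun i => Series (fun k => b k i)) n.
Proof.
  intros H. induction n. simpl. reflexivity.
  simpl. rewrite Series_plus. rewrite IHn. reflexivity. apply exs_sum; auto. apply H.
Qed.

Lemma fubini (b : nat -> nat -> R) (g h : nat -> R) :
  (forall k i, Rabs (b k i) <= g i * h k) -> (forall i, 0 <= g i) -> (forall k, 0 <= h k) ->
  ex_series g -> ex_series h ->
  is_series (fun i => Series (fun k => b k i)) (Series (fun k => Series (fun i => b k i))).
Proof.
  intros Hb Hg Hh Eg Eh.
  assert (Ek : forall k, ex_series (fun i => b k i)).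
  { intro k. apply exs_le with (fun i => g i * h k); auto. apply ex_series_scal_r; auto. }
  assert (Ei : forall i, ex_series (fun k => b k i)).
  { intro i. apply exs_le with (fun k => g i * h k); auto. apply exs_scal; auto. }
  assert (ET : ex_series (fun k => Series (fun i => b k i))).
  { apply exs_le with (fun k => Series g * h k). intro k.
    rewrite <- Series_scal_r. apply series_abs_le. auto. apply ex_series_scal_r; auto.
    apply exs_scal; auto. }
  assert (SH : 0 <= Series h) by (apply Series_nonneg; auto).
  apply is_series_Reals. intros eps Heps.
  assert (Hg' := Series_correct g Eg). apply is_series_Reals in Hg'.
  destruct (Hg' (eps / (Series h + 1))) as [N HN].
  { apply Rdiv_lt_0_compat; lra. }
  exists N. intros n Hn. specialize (HN n Hn).
  unfold R_dist in *.
  rewrite <- Series_sum_swap by auto.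
  rewrite <- Series_minus by (auto; apply exs_sum; auto).
  set (tau := Series (fun i => g (S n + i)%nat)).
  assert (Htau : tau = Series g - sum_f_R0 g n).
  { unfold tau. rewrite (Series_incr_n g (S n)) by (auto; lia). simpl pred. ring. }
  assert (Hrem : forall k, Series (fun i => b k i) - sum_f_R0 (fun i => b k i) n = Series (fun i => b k (S n + i)%nat)).
  { intro k. rewrite (Series_incr_n (fun i => b k i) (S n)) by (auto; lia). simpl pred. ring. }
  eapply Rle_lt_trans.
  { apply series_abs_le with (c := fun k => tau * h k).
    2: apply exs_scal; auto.
    intro k. rewrite Rabs_minus_sym, Hrem. unfold tau. rewrite <- Series_scal_r.
    apply series_abs_le. intro i. apply Hb.
    apply ex_series_scal_r. apply (ex_series_incr_n g (S n)). auto. }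
  rewrite Series_scal_l, Htau.
  assert (Series g - sum_f_R0 g n <= eps / (Series h + 1)).
  { rewrite Rabs_minus_sym in HN. apply Rabs_def2 in HN. lra. }
  assert (0 <= Series g - sum_f_R0 g n).
  { rewrite <- Htau. unfold tau. apply Series_nonneg. intro; auto. apply (ex_series_incr_n g (S n)). auto. }
  apply Rle_lt_trans with (eps / (Series h + 1) * Series h). apply Rmult_le_compat_r; auto.
  apply Rmult_lt_reg_r with (Series h + 1). lra.
  unfold Rdiv. replace (eps * / (Series h + 1) * Series h * (Series h + 1)) with (eps * Series h) by (field; lra).
  nra.
Qed.

Lemma C_n_0 n : Binomial.C n 0 = 1.
Proof. unfold Binomial.C. rewrite Nat.sub_0_r. simpl (fact 0). simpl INR. rewrite Rmult_1_l. unfold Rdiv. apply Rinv_r. apply INR_fact_neq_0. Qed.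

Lemma Dm0_phi l t : 0 < t -> Dm l 0 t = phi l 1 t.
Proof.
  intros Ht. unfold Dm, phi.
  assert (HP : Pm l 0 t = (- ln t) ^ l).
  { unfold Pm. destruct l as [|l].
    - simpl. unfold cf. rewrite C_n_0. simpl. ring.
    - rewrite decomp_sum by lia. simpl pred.
      rewrite (sum_eq _ (fun _ => 0)). rewrite sum_cte. unfold cf. rewrite C_n_0. simpl stirling1.
      rewrite Nat.sub_0_r. simpl. ring.
      intros i _. unfold cf. simpl stirling1. ring. }
  rewrite HP. assert (E : exp (- (1) * ln t) = / t) by (replace (- (1) * ln t) with (- ln t) by ring; rewrite exp_Ropp, exp_ln; lra). rewrite E. simpl. rewrite Rmult_1_r. reflexivity.
Qed.

Lemma iss_incr1 (a : nat -> R) (l : R) : is_series a l -> is_series (fun k => a (S k)) (l - a O).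
Proof.
  intros H. apply is_series_incr_1.
  replace l with (l - a O + a O) in H by ring. exact H.
Qed.

Lemma exp_npow n t : 0 < t -> exp (- INR n * ln t) = / t ^ n.
Proof.
  intros Ht. rewrite <- Rpower_pow by auto. unfold Rpower. rewrite <- exp_Ropp. f_equal. ring.
Qed.

Definition KL (l : nat) : R := sum_f_R0 (fun c => Binomial.C l c * INR (fact c) * Kc (l - c) (1/2)) l.

Lemma Lam_bound l t : 0 < t -> Lam l (Rabs (ln t)) <= KL l * (exp (1/2 * ln t) + exp (- (1/2) * ln t)).
Proof.
  intros Ht. unfold Lam, KL. rewrite Rmult_comm, scal_sum. apply sum_Rle. intros c _.
  pose proof (ln_pow_bound t (1/2) (l - c) Ht ltac:(lra)).
  pose proof (C_nonneg l c). pose proof (pos_INR (fact c)).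
  unfold Kc. rewrite !Rmult_assoc. apply Rmult_le_compat_l; auto. apply Rmult_le_compat_l; auto.
Qed.

Lemma KL_nonneg l : 0 <= KL l.
Proof.
  unfold KL. apply cond_pos_sum. intro c. apply Rmult_le_pos. apply Rmult_le_pos. apply C_nonneg. apply pos_INR.
  apply Kc_nonneg. lra.
Qed.

Definition E35 (t : R) : R := exp (- (3/2) * ln t) + exp (- (5/2) * ln t).

Lemma term_bound l i t x q : 0 < q <= t -> Rabs x < q ->
  Rabs (x ^ (S i) / INR (fact (S i)) * Dm l (S i) t)
  <= (INR (S (S i)) * (Rabs x / q) ^ i * Rabs x) * (KL l * E35 t).
Proof.
  intros Hq Hx. assert (Ht : 0 < t) by lra.
  set (Lm := Lam l (Rabs (ln t))).
  assert (HLm : Lm <= KL l * (exp (1/2 * ln t) + exp (- (1/2) * ln t))) by (apply Lam_bound; auto).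
  assert (Hexp : (exp (1/2 * ln t) + exp (- (1/2) * ln t)) * / t ^ 2 = E35 t).
  { rewrite <- (exp_npow 2) by auto. unfold E35. rewrite Rmult_plus_distr_r, <- !exp_plus. f_equal; f_equal; simpl; lra. }
  assert (HD : Rabs (Dm l (S i) t) <= INR (fact (S (S i))) * Lm * / t ^ (S (S i))).
  { unfold Dm. rewrite Rabs_mult, Rabs_Rinv, (Rabs_right (t ^ S (S i))) by (try apply Rle_ge; try apply pow_nonzero; try (left; apply pow_lt); lra).
    apply Rmult_le_compat_r. left; apply Rinv_0_lt_compat, pow_lt; lra.
    apply Pm_bound; auto. lra. }
  assert (HLm0 : 0 <= Lm).
  { unfold Lm, Lam. apply cond_pos_sum. intro c. apply Rmult_le_pos. apply Rmult_le_pos. apply C_nonneg. apply pos_INR.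
    apply pow_le, Rabs_pos. }
  assert (Hr : Rabs x / t <= Rabs x / q).
  { unfold Rdiv. apply Rmult_le_compat_l. apply Rabs_pos. apply Rinv_le_contravar; lra. }
  assert (Hr0 : 0 <= Rabs x / t) by (unfold Rdiv; apply Rmult_le_pos; [apply Rabs_pos| left; apply Rinv_0_lt_compat; lra]).
  rewrite Rabs_mult. unfold Rdiv. rewrite Rabs_mult, <- RPow_abs, Rabs_Rinv, (Rabs_right (INR (fact (S i))))
    by (try apply Rle_ge, pos_INR; apply INR_fact_neq_0).
  apply Rle_trans with (Rabs x ^ S i * / INR (fact (S i)) * (INR (fact (S (S i))) * Lm * / t ^ S (S i))).
  { apply Rmult_le_compat_l; auto. apply Rmult_le_pos. apply pow_le, Rabs_pos. left; apply Rinv_0_lt_compat, INR_fact_lt_0. }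
  replace (Rabs x ^ S i * / INR (fact (S i)) * (INR (fact (S (S i))) * Lm * / t ^ S (S i)))
    with (INR (S (S i)) * (Rabs x / t) ^ i * Rabs x * (Lm * / t ^ 2)).
  2:{ rewrite (fact_simpl (S i)), mult_INR. unfold Rdiv. rewrite Rpow_mult_distr, pow_inv.
      replace (S (S i)) with (i + 2)%nat at 3 by lia. rewrite pow_add. simpl pow.
      field. repeat split; first [apply INR_fact_neq_0 | apply pow_nonzero; lra | lra]. }
  rewrite <- Hexp.
  assert (0 <= (Rabs x / t) ^ i) by (apply pow_le; auto).
  assert ((Rabs x / t) ^ i <= (Rabs x / q) ^ i) by (apply pow_incr; auto).
  assert (0 < / t ^ 2) by (apply Rinv_0_lt_compat, pow_lt; lra).
  pose proof (pos_INR (S (S i))). pose proof (Rabs_pos x).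
  assert (Lm * / t ^ 2 <= KL l * (exp (1 / 2 * ln t) + exp (- (1 / 2) * ln t)) * / t ^ 2) by (apply Rmult_le_compat_r; lra).
  rewrite <- (Rmult_assoc (KL l)).
  apply Rmult_le_compat.
  - apply Rmult_le_pos; auto. apply Rmult_le_pos; auto.
  - apply Rmult_le_pos; lra.
  - apply Rmult_le_compat_r; auto. apply Rmult_le_compat_l; auto.
  - exact H4.
Qed.

Lemma E35_mono a b : 0 < a <= b -> E35 b <= E35 a.
Proof.
  intros H. unfold E35. assert (ln a <= ln b) by (apply ln_le_mono; lra).
  assert (exp (- (3/2) * ln b) <= exp (- (3/2) * ln a)) by (apply exp_le_exp; lra).
  assert (exp (- (5/2) * ln b) <= exp (- (5/2) * ln a)) by (apply exp_le_exp; lra). lra.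
Qed.

Lemma E35_nonneg a : 0 <= E35 a.
Proof. unfold E35. pose proof (exp_pos (- (3/2) * ln a)). pose proof (exp_pos (- (5/2) * ln a)). lra. Qed.

Lemma Dm_diff_U l m a : 0 < a ->
  Dm l m a - Dm l m (a + 1) = sum_f_R0 (fun c => cf l m c * (phi (l - c) (INR (S m)) a - phi (l - c) (INR (S m)) (a + 1))) l.
Proof.
  intros Ha. unfold Dm, Pm, phi. rewrite !exp_npow by lra.
  rewrite Rmult_comm, scal_sum, (Rmult_comm _ (/ (a + 1) ^ S m)), scal_sum, <- minus_sum.
  apply sum_eq. intros c _. ring.
Qed.

Theorem main (q x : R) (l : nat) (hq : 0 < q) (hx : Rabs x < q) :
  exists S : R,
    is_series
      (fun i : nat =>
         let j := (i + 2)%nat in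
         x ^ (j - 1) / INR (fact (j - 1)) *
         sum_f_R0
           (fun k : nat =>
              Binomial.C l k * (-1) ^ k * INR (fact k) * stirling1 j (k + 1)
              * zetaE_deriv (l - k) (INR j) q) l)
      S
    /\ mod_stieltjes l (q + x) = mod_stieltjes l q + (-1) ^ l * S.
Proof.
  set (T := fun A i => x ^ (S i) / INR (fact (S i)) * Dm l (S i) A).
  set (bb := fun k i => T (ak k q) i - T (ak k q + 1) i).
  set (rho := Rabs x / q).
  set (g := fun i => INR (S (S i)) * rho ^ i * Rabs x).
  set (h := fun k => KL l * E35 (ak k q) * 2).
  assert (Hak : forall k, q <= ak k q) by (intro k; unfold ak; pose proof (pos_INR k); lra).
  assert (Hrho : 0 <= rho < 1).
  { unfold rho. split. apply Rmult_le_pos; [apply Rabs_pos| left; apply Rinv_0_lt_compat; lra].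
    apply Rmult_lt_reg_r with q. lra. unfold Rdiv. rewrite Rmult_assoc, Rinv_l; lra. }
  assert (Hg : forall i, 0 <= g i).
  { intro i. unfold g. apply Rmult_le_pos. apply Rmult_le_pos. apply pos_INR. apply pow_le; lra. apply Rabs_pos. }
  assert (Hh : forall k, 0 <= h k).
  { intro k. unfold h. pose proof (KL_nonneg l). pose proof (E35_nonneg (ak k q)). apply Rmult_le_pos; [apply Rmult_le_pos|]; lra. }
  assert (Hbb : forall k i, Rabs (bb k i) <= g i * h k).
  { intros k i. unfold bb, h.
    pose proof (term_bound l i (ak k q) x q ltac:(split; [lra| apply Hak]) hx).
    pose proof (term_bound l i (ak k q + 1) x q ltac:(split; [lra| pose proof (Hak k); lra]) hx).
    pose proof (E35_mono (ak k q) (ak k q + 1) ltac:(pose proof (Hak k); split; lra)).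
    pose proof (KL_nonneg l). pose proof (Hg i).
    eapply Rle_trans. apply Rabs_triang. rewrite Rabs_Ropp. unfold T.
    fold rho in H, H0. fold (g i) in H, H0.
    assert (g i * (KL l * E35 (ak k q + 1)) <= g i * (KL l * E35 (ak k q))).
    { apply Rmult_le_compat_l; auto. apply Rmult_le_compat_l; auto. }
    lra. }
  assert (Eg : ex_series g).
  { set (r' := (rho + 1) / 2).
    apply exs_le with (fun i => (Rabs x * 2) * ((INR i + 1) ^ 2 * r' ^ i)).
    - intro i. rewrite Rabs_right by (apply Rle_ge; auto). unfold g. rewrite !S_INR.
      pose proof (pos_INR i). pose proof (Rabs_pos x).
      assert (rho ^ i <= r' ^ i) by (apply pow_incr; unfold r'; lra).
      assert (0 <= rho ^ i) by (apply pow_le; lra).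
      assert (INR i + 1 + 1 <= 2 * (INR i + 1) ^ 2) by nra.
      replace (Rabs x * 2 * ((INR i + 1) ^ 2 * r' ^ i)) with ((2 * (INR i + 1) ^ 2) * r' ^ i * Rabs x) by ring.
      apply Rmult_le_compat_r; auto. apply Rmult_le_compat; lra.
    - apply exs_scal, geo2. unfold r'; lra. }
  assert (Eh : ex_series h).
  { unfold h. apply ex_series_scal_r. apply exs_scal. unfold E35.
    apply exs_plus; apply pser2; lra. }
  pose proof (fubini bb g h Hbb Hg Hh Eg Eh) as HF.
  exists (Series (fun k => Series (fun i => bb k i))). split.
  - apply iss_ext with (fun i => Series (fun k => bb k i)); [| exact HF]. intro i.
    cbv zeta. replace (i + 2 - 1)%nat with (S i) by lia. replace (i + 2)%nat with (S (S i)) by lia.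
    unfold bb, T.
    rewrite (Series_ext _ (fun k => x ^ S i / INR (fact (S i)) *
       sum_f_R0 (fun c => cf l (S i) c * U (l - c) (INR (S (S i))) q k) l)).
    2:{ intro k. rewrite <- Rmult_minus_distr_l. f_equal. unfold U. apply Dm_diff_U. pose proof (Hak k); lra. }
    rewrite Series_scal_l. f_equal.
    rewrite (Series_sum_swap (fun k c => cf l (S i) c * U (l - c) (INR (S (S i))) q k)).
    2:{ intro c. apply exs_scal. apply U_ex. apply lt_0_INR; lia. lra. }
    apply sum_eq. intros c _. rewrite Series_scal_l. unfold zetaE_deriv.
    rewrite zeta_deriv by (try apply lt_0_INR; try lia; lra). unfold cf. rewrite Nat.add_1_r. ring.
  - unfold mod_stieltjes, zetaE_deriv.
    assert (Hqx : 0 < q + x) by (unfold Rabs in hx; destruct Rcase_abs in hx; lra).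
    rewrite !zeta_deriv by lra.
    assert (HS : Series (fun k => Series (fun i => bb k i)) = Series (fun k => U l 1 (q + x) k - U l 1 q k)).
    { apply Series_ext. intro k. apply is_series_unique.
      set (A := ak k q).
      assert (HA : q <= A) by apply Hak.
      assert (TA : forall B, q <= B -> is_series (fun i => T B i) (Dm l 0 (B + x) - Dm l 0 B)).
      { intros B HB. pose proof (taylor_series l B x ltac:(lra) ltac:(lra)) as HT.
        apply iss_incr1 in HT. replace (Dm l 0 B * x ^ 0 / INR (fact 0)) with (Dm l 0 B) in HT by (simpl; unfold Rdiv; rewrite Rinv_1; ring). eapply iss_ext. 2: exact HT. intro i. unfold T. unfold Rdiv. ring. }
      replace (U l 1 (q + x) k - U l 1 q k) with ((Dm l 0 (A + x) - Dm l 0 A) - (Dm l 0 (A + 1 + x) - Dm l 0 (A + 1))).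
      - eapply iss_ext. 2: apply (iss_minus _ _ _ _ (TA A HA) (TA (A + 1) ltac:(lra))).
        intro i. unfold bb. fold A. reflexivity.
      - unfold U. replace (ak k (q + x)) with (A + x) by (unfold A, ak; ring).
        rewrite !Dm0_phi by (unfold Rabs in hx; destruct Rcase_abs in hx; lra).
        replace (A + 1 + x) with (A + x + 1) by ring. fold A. ring. }
    rewrite HS, Series_minus.
    2: apply U_ex; lra. 2: apply U_ex; lra.
    ring.
Qed.


Theorem theorem3p9 (q x : R) (l : nat) (hq : 0 < q) (hx : Rabs x < q) :
  exists S : R,
    is_series
      (fun i : nat =>
         let j := (i + 2)%nat in
         x ^ (j - 1) / INR (fact (j - 1)) *
         sum_f_R0
           (fun k : nat =>
              Binomial.C l k * (-1) ^ k * INR (fact k) * stirling1 j (k + 1)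
              * zetaE_deriv (l - k) (INR j) q) l)
      S
    /\ mod_stieltjes l (q + x) = mod_stieltjes l q + (-1) ^ l * S.
Proof.
  exact (main q x l hq hx).
Qed.
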